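(* Let $\nu$ be a signature. The subspace $H_\nu\subset\mathfrak H_\nu$ is invariant under the operators $\mathfrak r_\nu(\mathcal A)$ for all $\mathcal A\in\widetilde{\mathrm{Hinge}}_n$.
   Context: Let $V=\mathbb C^n$ with basis $e_1,\dots,e_n$. A signature is a tuple of integers $\nu_1\ge\dots\ge\nu_n\ge0$; put $\nu_{n+1}=0$, $\mathfrak H_\nu=\bigotimes_{j=1}^n(\Lambda^jV)^{\otimes(\nu_j-\nu_{j+1})}$, $\Xi_\nu=\bigotimes_j(e_1\wedge\dots\wedge e_j)^{\otimes(\nu_j-\nu_{j+1})}$. For $\mathcal A=(A_0,\dots,A_n)$ with $A_j\in\mathrm{Mat}(\Lambda^jV)$, $\mathfrak r_\nu(\mathcal A)=\bigotimes_jA_j^{\otimes(\nu_j-\nu_{j+1})}$. With $\lambda^j_{\mathrm{cha}}(g)v_1\wedge\dots\wedge v_j=gv_1\wedge\dots\wedge gv_j$, $H_\nu$ is the linear span of the vectors $\mathfrak r_\nu(\lambda^0_{\mathrm{cha}}(g),\dots,\lambda^n_{\mathrm{cha}}(g))\Xi_\nu$, $g\in\mathrm{GL}_n(\mathbb C)$. A linear relation is a subspace $P\subset V\oplus V$; $\mathrm{Ker}\,P=\{v: v\oplus0\in P\}$, $\mathrm{Dom}\,P,\mathrm{Im}\,P$ the projections to the first and second summands, $\mathrm{Indef}\,P=\{w:0\oplus w\in P\}$, $\mathrm{rk}\,P=\dim\mathrm{Dom}\,P-\dim\mathrm{Ker}\,P$. If $\dim P=n$, choose bases $f_1,\dots,f_a,g_1,\dots,g_b,h_1,\dots,h_c$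 and $F_1,\dots,F_a,G_1,\dots,G_b,H_1,\dots,H_c$ of $V$ with $P$ spanned by $0\oplus F_i$, $g_j\oplus G_j$, $h_k\oplus0$; $\lambda(P)$ maps $f_1\wedge\dots\wedge f_a\wedge g_{i_1}\wedge\dots\wedge g_{i_s}$ to $F_1\wedge\dots\wedge F_a\wedge G_{i_1}\wedge\dots\wedge G_{i_s}$ and kills the other basis monomials (up to scalar); $\lambda^m(P)$ its restriction to $\Lambda^mV$. A hinge is a sequence $\mathcal P=(P_1,\dots,P_k)$ of $n$-dimensional relations with $\mathrm{Ker}\,P_j=\mathrm{Dom}\,P_{j+1}$, $\mathrm{Im}\,P_j=\mathrm{Indef}\,P_{j+1}$, $\mathrm{Dom}\,P_1=V$, $\mathrm{Im}\,P_k=V$, $\mathrm{rk}\,P_j>0$. For each $m$ there is a nonzero $\lambda^m(P_j)$, and any two nonzero ones are proportional; $\lambda^m(\mathcal P)$ denotes it (up to scalar). $\widetilde{\mathrm{Hinge}}_n$ is the set of tuples $(c_0\lambda^0(\mathcal P),\dots,c_n\lambda^n(\mathcal P))$ with $\mathcal P$ a hinge and $c_j\in\mathbb C$. *)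

(* Defs.v *)
From HB Require Import structures.
From mathcomp Require Import all_boot all_order all_algebra.
From mathcomp Require Import reals.
From mathcomp.real_closed Require Import complex.
Unset Printing Implicit Defensive.
Import Order.TTheory GRing.Theory Num.Theory.
Local Open Scope ring_scope.

Section Defs.
Variables (K : fieldType) (n : nat).

(* ---------- exterior algebra Lambda V, V = K^n, basis e_S, S : {set 'I_n} ----
   e_S = e_{s_1} /\ ... /\ e_{s_k} with s_1 < ... < s_k (enum S is increasing).
   A vector of Lambda V is given by its coordinates {set 'I_n} -> K; Lambda^m V
   is spanned by the e_S with #|S| = m.                                       *)

(* coordinates (on the basis e_S) of the wedge  b_{u_1} /\ ... /\ b_{u_k},
   u_1 < ... < u_k the elements of U, where b_i is the i-th row of B
   (b_i = \sum_k B i k e_k):  the coefficient of e_S is the minor B[U,S]. *)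
Definition wedge (B : 'M[K]_n) (U : {set 'I_n}) (S : {set 'I_n}) : K :=
  if #|S| == #|U| then
    \det (\matrix_(i < #|U|, j < #|U|)
            B (enum_val i) (nth (enum_val i) (enum S) j))
  else 0.

(* lambda_cha(g) on Lambda V, as a matrix on the basis e_S:
   entry (S, T) = coefficient of e_S in g e_{t_1} /\ ... /\ g e_{t_k}
   (g e_t is the t-th column of g, i.e. the t-th row of g^T). *)
Definition lambda_cha (g : 'M[K]_n) (S T : {set 'I_n}) : K := wedge g^T T S.

(* ---------- signatures and the tensor space frak H_nu ----------
   nu = [:: nu_1; ...; nu_n], nu_{n+1} = 0 (= nth 0 nu n). *)
Definition signature (nu : seq nat) : Prop :=
  size nu = n /\ sorted geq nu.

Definition nuj (nu : seq nat) (j : nat) : nat := nth 0%N nu j.-1.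

(* list of the degrees of the tensor factors of frak H_nu, in order:
   degree j (1 <= j <= n) repeated nu_j - nu_{j+1} times *)
Definition degs (nu : seq nat) : seq nat :=
  flatten [seq nseq (nuj nu j - nuj nu j.+1) j | j <- iota 1 n].

(* basis of frak H_nu: tuples (S_t)_t of subsets with #|S_t| = degree of factor t *)
Definition TIdx (nu : seq nat) : finType :=
  {I : {ffun 'I_(size (degs nu)) -> {set 'I_n}} |
     [forall t, #|I t| == nth 0%N (degs nu) t]}.

(* a tuple A = (A_0, ..., A_n), A_m in Mat(Lambda^m V), given as
   A m S T for #|S| = #|T| = m (other entries are irrelevant). *)
Definition MatTuple := nat -> {set 'I_n} -> {set 'I_n} -> K.

Definition rnu (nu : seq nat) (A : MatTuple) (x : TIdx nu -> K) : TIdx nu -> K :=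
  fun I => \sum_(J : TIdx nu)
            (\prod_(t < size (degs nu))
               A (nth 0%N (degs nu) t) (val I t) (val J t)) * x J.

(* Xi_nu = tensor product of the e_1 /\ ... /\ e_j *)
Definition Xi (nu : seq nat) : TIdx nu -> K :=
  fun I => if [forall t, val I t == [set i : 'I_n | (i < nth 0%N (degs nu) t)%N]]
           then 1 else 0.

Definition Hgen (nu : seq nat) (g : 'M[K]_n) : TIdx nu -> K :=
  rnu nu (fun _ => lambda_cha g) (Xi nu).

Definition inH (nu : seq nat) (x : TIdx nu -> K) : Prop :=
  exists (m : nat) (gs : 'I_m -> 'M[K]_n) (cs : 'I_m -> K),
    (forall i, gs i \in unitmx) /\
    forall I, x I = \sum_(i < m) cs i * Hgen nu (gs i) I.

(* ---------- linear relations ----------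
   A linear relation P in V (+) V is the row space of P : 'M_(n+n); a row
   vector of K^(n+n) is v (+) w = row_mx v w. *)
Definition relDom (P : 'M[K]_(n + n)) : 'M[K]_(n + n, n) := lsubmx P.
Definition relIm (P : 'M[K]_(n + n)) : 'M[K]_(n + n, n) := rsubmx P.
Definition relKer (P : 'M[K]_(n + n)) : 'M[K]_(n + n, n) :=
  kermx (rsubmx P) *m lsubmx P.
Definition relIndef (P : 'M[K]_(n + n)) : 'M[K]_(n + n, n) :=
  kermx (lsubmx P) *m rsubmx P.
Definition relrk (P : 'M[K]_(n + n)) : nat :=
  (\rank (relDom P) - \rank (relKer P))%N.

(* the monomials b_U kept by lambda(P): U = {f_1..f_a} u (subset of g's),
   with the basis ordered f_1..f_a, g_1..g_b, h_1..h_c *)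
Definition keptU (a b : nat) (U : {set 'I_n}) : bool :=
  [forall i : 'I_n, ((i < a)%N ==> (i \in U)) && ((i \in U) ==> (i < a + b)%N)].

(* L (a matrix on Lambda V in the basis e_S) is a lambda(P) for some
   admissible choice of bases f,g,h (rows of B) and F,G,H (rows of B'). *)
Definition is_lambda (P : 'M[K]_(n + n)) (L : {set 'I_n} -> {set 'I_n} -> K) : Prop :=
  exists (a b c : nat) (B B' : 'M[K]_n),
    [/\ (a + b + c)%N = n, B \in unitmx, B' \in unitmx,
        (P == \matrix_(i < n)
                 row_mx (if (i < a)%N then 0 else row i B)
                        (if (a + b <= i)%N then 0 else row i B'))%MS &
        forall (U S : {set 'I_n}),
          \sum_(T : {set 'I_n}) L S T * wedge B U T =
          (if keptU a b U then wedge B' U S else 0)].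

Definition relj (Ps : seq 'M[K]_(n + n)) (j : nat) : 'M[K]_(n + n) := nth 0 Ps j.

Definition hinge (Ps : seq 'M[K]_(n + n)) : Prop :=
  [/\ (0 < size Ps)%N,
      forall j, (j < size Ps)%N ->
        \rank (relj Ps j) = n /\ (0 < relrk (relj Ps j))%N,
      forall j, (j.+1 < size Ps)%N ->
        (relKer (relj Ps j) == relDom (relj Ps j.+1))%MS /\
        (relIm (relj Ps j) == relIndef (relj Ps j.+1))%MS,
      row_full (relDom (relj Ps 0)) &
      row_full (relIm (relj Ps (size Ps).-1))].

Definition nonzero_deg (m : nat) (L : {set 'I_n} -> {set 'I_n} -> K) : Prop :=
  exists S T : {set 'I_n}, [/\ #|S| = m, #|T| = m & L S T != 0].

(* tilde Hinge_n : tuples (c_0 lambda^0(P), ..., c_n lambda^n(P)); lambda^m(P)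
   is a nonzero lambda^m(P_j) for some j (all such are proportional). *)
Definition inHingeT (A : MatTuple) : Prop :=
  exists Ps : seq 'M[K]_(n + n), hinge Ps /\
    forall m : nat, (m <= n)%N ->
      exists (c : K) (j : nat) (L : {set 'I_n} -> {set 'I_n} -> K),
        [/\ (j < size Ps)%N, is_lambda (relj Ps j) L, nonzero_deg m L &
            forall S T : {set 'I_n}, #|S| = m -> #|T| = m -> A m S T = c * L S T].

End Defs.

(* Main.v *)
Require Import Defs.
From HB Require Import structures.
From mathcomp Require Import all_boot all_order all_algebra.
From mathcomp Require Import reals.
From mathcomp.real_closed Require Import complex.
From mathcomp Require Import all_fingroup.
From mathcomp Require Import zify.
From Stdlib Require Import IndefiniteDescription.
Import GRing.Theory Num.Theory.
Local Open Scope ring_scope.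

Module Helpers.
Set Implicit Arguments. Unset Strict Implicit. Unset Printing Implicit Defensive.
Import Order.TTheory.

Section Ext.
Variables (K : fieldType) (n : nat) (x0 : 'I_n).

Definition sel (U : {set 'I_n}) (j : nat) : 'I_n := nth x0 (enum U) j.
Definition minorS m d (M : 'M[K]_(m,n)) (U : {set 'I_n}) : 'M[K]_(m,d) :=
  \matrix_(i, j) M i (sel U j).
Definition rowsel d p (U : {set 'I_n}) (C : 'M[K]_(n,p)) : 'M[K]_(d,p) :=
  \matrix_(i, k) C (sel U i) k.
Definition ext d (X : 'M[K]_(d,n)) (S : {set 'I_n}) : K :=
  if #|S| == d then \det (minorS d X S) else 0.

Lemma sel_mem (U : {set 'I_n}) j : (j < #|U|)%N -> sel U j \in U.
Proof. by move=> h; rewrite /sel -mem_enum mem_nth // -cardE. Qed.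

Lemma sel_inj (U : {set 'I_n}) i j : (i < #|U|)%N -> (j < #|U|)%N -> sel U i = sel U j -> i = j.
Proof.
move=> hi hj e; apply/eqP; rewrite -(nth_uniq x0 _ _ (enum_uniq U)) ?e -?cardE //.
  by move: e; rewrite /sel => ->.
Qed.

Lemma sel_surj (U : {set 'I_n}) k : k \in U -> exists2 j, (j < #|U|)%N & sel U j = k.
Proof.
move=> kU; exists (index k (enum U)); first by rewrite cardE index_mem mem_enum.
by rewrite /sel nth_index // mem_enum.
Qed.

Lemma sum_sel (U : {set 'I_n}) d (F : 'I_n -> K) : #|U| = d ->
  \sum_(j < d) F (sel U j) = \sum_(k in U) F k.
Proof.
move=> hd; transitivity (\sum_(k <- enum U) F k); last exact: big_enum.
rewrite (big_nth x0) -cardE hd big_mkord.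
by apply: eq_bigr.
Qed.

Lemma wedge_ext (B : 'M[K]_n) (U : {set 'I_n}) d S : #|U| = d ->
  wedge K n B U S = ext (rowsel d U B) S.
Proof.
move=> hd; subst d; rewrite /wedge /ext; case: eqP => // hS.
congr (\det _); apply/matrixP => i j; rewrite !mxE.
rewrite (enum_val_nth x0) /sel (set_nth_default x0 (nth x0 (enum U) i)) //.
by rewrite -cardE hS.
Qed.

Lemma minorS_mul m p d (A : 'M[K]_(m,p)) (B : 'M[K]_(p,n)) U :
  minorS d (A *m B) U = A *m minorS d B U.
Proof. by apply/matrixP => i j; rewrite !mxE; apply: eq_bigr => k _; rewrite !mxE. Qed.

Lemma rowsel_mul d p q U (A : 'M[K]_(n,p)) (B : 'M[K]_(p,q)) :
  rowsel d U (A *m B) = rowsel d U A *m B.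
Proof. by apply/matrixP => i j; rewrite !mxE; apply: eq_bigr => k _; rewrite !mxE. Qed.

Lemma rowsel_minorS d e U (C : 'M[K]_n) S :
  rowsel d U (minorS e C S) = minorS e (rowsel d U C) S.
Proof. by apply/matrixP => i j; rewrite !mxE. Qed.

Lemma ext_mul d (Q : 'M[K]_d) (X : 'M[K]_(d,n)) S : ext (Q *m X) S = \det Q * ext X S.
Proof. by rewrite /ext; case: eqP => _; rewrite ?mulr0 // minorS_mul det_mulmx. Qed.

Lemma minorS_1 m d (X : 'M[K]_(m,n)) U : minorS d X U = X *m minorS d 1%:M U.
Proof. by rewrite -minorS_mul mulmx1. Qed.

Lemma det_rank d (N : 'M[K]_d) : (\rank N < d)%N -> \det N = 0.
Proof.
move=> h; apply/eqP; apply/negPn/negP => hn.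
have : N \in unitmx by rewrite unitmxE unitfE.
by move/mxrank_unit => e; rewrite e ltnn in h.
Qed.

Lemma ext_rank d (X : 'M[K]_(d,n)) S : (\rank X < d)%N -> ext X S = 0.
Proof.
move=> h; rewrite /ext; case: eqP => // _; apply: det_rank.
by rewrite minorS_1; apply: leq_ltn_trans (mxrankM_maxl _ _) h.
Qed.

End Ext.


Section CB.
Variables (K : fieldType).

Lemma det_expand d p (M : 'M[K]_(d,p)) (N : 'M[K]_(p,d)) :
  \det (M *m N) = \sum_(f : ('I_p ^ d)%type)
     (\prod_i M i (f i)) * \det (\matrix_(i, j) N (f i) j).
Proof.
transitivity (\sum_(s : 'S_d) \sum_(f : ('I_p ^ d)%type)
   (-1) ^+ s * ((\prod_i M i (f i)) * \prod_i N (f i) (s i))).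
  apply: eq_bigr => s _; rewrite -big_distrr /=; congr (_ * _).
  rewrite (eq_bigr (fun f : ('I_p ^ d)%type => \prod_i (M i (f i) * N (f i) (s i)))); last first.
    by move=> f _; rewrite big_split.
  rewrite -(bigA_distr_bigA (fun i k => M i k * N k (s i))) /=.
  by apply: eq_bigr => i _; rewrite mxE.
rewrite exchange_big /=; apply: eq_bigr => f _.
rewrite big_distrr /=; apply: eq_bigr => s _.
rewrite mulrCA; congr (_ * (_ * _)).
by apply: eq_bigr => i _; rewrite mxE.
Qed.


Lemma det_rowsub0 d p (N : 'M[K]_(p,d)) (f : ('I_p ^ d)%type) :
  ~~ injectiveb f -> \det (\matrix_(i, j) N (f i) j) = 0.
Proof.
case/injectivePn => i1 [i2 Di12 Ef12].
by rewrite (determinant_alternate Di12) // => j; rewrite !mxE Ef12.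
Qed.

Variables (n : nat) (x0 : 'I_n).

Lemma cauchy_binet d (M : 'M[K]_(d,n)) (N : 'M[K]_(n,d)) :
  \det (M *m N) = \sum_(U : {set 'I_n} | #|U| == d)
      \det (minorS x0 d M U) * \det (rowsel x0 d U N).
Proof.
pose G (f : ('I_n ^ d)%type) := (\prod_i M i (f i)) * \det (\matrix_(i, j) N (f i) j).
have HG (f : ('I_n ^ d)%type) : ~~ injectiveb f -> G f = 0 by move=> nf; rewrite /G det_rowsub0 // mulr0.
rewrite det_expand (eq_bigr G) // [LHS](bigID (fun f : ('I_n ^ d)%type => injectiveb f)) /= [X in _ + X]big1 ?addr0;
  last by move=> f /HG.
rewrite (partition_big (fun f : ('I_n ^ d)%type => [set f i | i in 'I_d])
   (fun U => #|U| == d)) /=; last first.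
  by move=> f /injectiveP inj; rewrite card_imset // card_ord.
apply: eq_bigr => U /eqP hU.
rewrite -det_mulmx det_expand.
pose h (g : ('I_d ^ d)%type) : ('I_n ^ d)%type := [ffun i => sel x0 U (g i)].
rewrite (eq_bigr (fun g => G (h g))); last first.
  move=> g _; rewrite /G; congr (_ * _).
    by apply: eq_bigr => i _; rewrite !mxE ffunE.
  by congr (\det _); apply/matrixP => i j; rewrite !mxE ffunE.
have ltd (g : ('I_d ^ d)%type) i : (g i < #|U|)%N by rewrite hU.
have injh g : injectiveb (h g) = injectiveb g.
  apply/injectiveP/injectiveP => ig i j e.
    by apply: ig; rewrite /h !ffunE e.
  apply: ig; apply: val_inj; apply: (sel_inj (x0 := x0) (ltd g i) (ltd g j)).
  by move: e; rewrite /h !ffunE.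
rewrite [RHS](bigID (fun g : ('I_d ^ d)%type => injectiveb g)) /= [X in _ + X]big1 ?addr0; last first.
  by move=> g ng; apply: HG; rewrite injh.
symmetry; rewrite (reindex h) /=.
  apply: eq_bigl => g; rewrite injh; case ig: (injectiveb g) => //=.
  apply/esym/eqP/setP => k; apply/imsetP/idP => [[i _ ->]|kU].
    by rewrite ffunE sel_mem.
  have [j jlt <-] := sel_surj x0 kU.
  have jd : (j < d)%N by rewrite -hU.
  have /injectiveP ig' := ig.
  have [i _ gi] : exists2 i, true & g i = Ordinal jd.
    have [gi _ gK] := injF_bij ig'.
    by exists (gi (Ordinal jd)); rewrite ?gK.
  by exists i => //; rewrite ffunE gi.
exists (fun f : ('I_n ^ d)%type => [ffun i : 'I_d => insubd i (index (f i) (enum U))]).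
  move=> g _; apply/ffunP => i; rewrite /h !ffunE.
  apply: val_inj; rewrite insubdK /sel ?index_uniq ?enum_uniq -?cardE //.
  by rewrite unfold_in /=.
move=> f; rewrite inE /= => /andP [_ /eqP fU]; apply/ffunP => i; rewrite /h !ffunE.
have fiU : f i \in U by rewrite -fU; apply/imsetP; exists i.
rewrite insubdK /sel ?nth_index ?mem_enum //.
by rewrite unfold_in /= (leq_trans _ (eq_leq hU)) // cardE index_mem mem_enum.
Qed.


Lemma ext_CB d (M : 'M[K]_(d,n)) (C : 'M[K]_n) S :
  ext x0 (M *m C) S = \sum_(U : {set 'I_n} | #|U| == d)
      \det (minorS x0 d M U) * ext x0 (rowsel x0 d U C) S.
Proof.
rewrite /ext; case: eqP => hS; last by rewrite big1 // => U _; rewrite mulr0.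
by rewrite minorS_mul cauchy_binet; apply: eq_bigr => U _; rewrite rowsel_minorS.
Qed.

Lemma sel_sorted (U : {set 'I_n}) a :
  (forall k : 'I_n, (k < a)%N -> k \in U) -> (a <= n)%N ->
  forall j, (j < #|U|)%N ->
    ((j < a)%N -> val (sel x0 U j) = j) /\ ((a <= j)%N -> (a <= sel x0 U j)%N).
Proof.
move=> hU an j jU.
pose p (m : nat) := (m < n)%N && (insubd x0 m \in U).
have e : map val (enum U) = iota 0 a ++ filter p (iota a (n - a)).
  rewrite {1}/enum_mem -enumT.
  rewrite (@eq_filter _ _ (preim val p)); last first.
    move=> x /=; rewrite /p ltn_ord /=.
    by congr (_ \in U); apply: val_inj; rewrite insubdK // unfold_in /= ltn_ord.
  rewrite -filter_map val_enum_ord -{1}(subnKC an) iotaD filter_cat add0n.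
  congr (_ ++ _); apply/all_filterP/allP => k; rewrite mem_iota add0n /= => ka.
  rewrite /p (leq_trans ka an) /=.
  have kn : (k < n)%N by apply: leq_trans ka an.
  by rewrite (_ : insubd x0 k = Ordinal kn) ?hU //; apply: val_inj; rewrite insubdK.
have jsz : (j < size (enum U))%N by rewrite -cardE.
have ev : nat_of_ord (sel x0 U j) = nth (val x0) (map val (enum U)) j by rewrite (nth_map x0).
rewrite /= ev.
rewrite e nth_cat size_iota; split => ja; first by rewrite ja nth_iota.
rewrite ltnNge ja /=.
have : nth (val x0) (filter p (iota a (n - a))) (j - a) \in filter p (iota a (n - a)).
  apply: mem_nth; move: jsz; rewrite -(size_map val) e size_cat size_iota.
  by rewrite -{1}(subnKC ja) ltn_add2l.
by rewrite mem_filter mem_iota => /andP [_ /andP [] ].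
Qed.
End CB.


Section Mat.
Variables (K : fieldType).

Lemma det_row0 d (N : 'M[K]_d) i : (forall j, N i j = 0) -> \det N = 0.
Proof. by move=> h; rewrite (expand_det_row _ i) big1 // => j _; rewrite h mul0r. Qed.

Lemma det_col0 d (N : 'M[K]_d) j : (forall i, N i j = 0) -> \det N = 0.
Proof. by move=> h; rewrite -det_tr (det_row0 (i := j)) // => i; rewrite mxE h. Qed.

Lemma blockdet d a (N : 'M[K]_d) : (forall i j : 'I_d, (j < a)%N -> N i j = (i == j)%:R) ->
  \det N = \det (\matrix_(i, j) (if (j < a)%N || (a <= i)%N then N i j else 0)).
Proof.
move=> hN; set N' := \matrix_(i, j) _.
pose T : 'M[K]_d := 1%:M + \matrix_(i, j) (if (i < a)%N && (a <= j)%N then N i j else 0).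
have -> : N = N' *m T.
  apply/matrixP => i k; rewrite mulmxDr mulmx1 !mxE.
  under eq_bigr do rewrite !mxE.
  case: (ltnP k a) => ka /=.
    by rewrite big1 ?addr0 // => l _; rewrite andbF mulr0.
  have -> : \sum_(l < d) (if (l < a)%N || (a <= i)%N then N i l else 0) *
       (if (l < a)%N && true then N l k else 0) = if (i < a)%N then N i k else 0.
    case: (ltnP i a) => ia.
      rewrite (bigD1 i) //= ia hN // eqxx mul1r big1 ?addr0 // => l li.
      rewrite orbF andbT; case: ifP => la; last by rewrite mul0r.
      by rewrite hN // (_ : (i == l) = false) ?mul0r //; apply/negbTE; rewrite eq_sym.
    rewrite big1 // => l _; case: ifP => la; last by rewrite mul0r.
    rewrite orbT andbT in la *; case: ifP => la'; last by rewrite mulr0.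
    rewrite hN //.
    by rewrite (_ : (i == l) = false) ?mul0r //; apply/negbTE; apply: contraTneq la' => e; rewrite -e -leqNgt.
  by case: (ltnP i a) => ia; rewrite ?orbF ?orbT ?add0r ?addr0.
rewrite det_mulmx; suff -> : \det T = 1 by rewrite mulr1.
rewrite -det_tr det_trig; last first.
  apply/forallP => i; apply/forallP => j; apply/implyP => ij; rewrite !mxE.
  rewrite (_ : (j == i) = false); last by apply/negbTE; rewrite neq_ltn ij orbT.
  case: ifP => [/andP [ja ai]|_]; last by rewrite addr0.
  by move: (leq_ltn_trans ai (ltn_trans ij ja)); rewrite ltnn.
rewrite big1 // => i _; rewrite !mxE eqxx.
by case: ifP => [/andP [ia ai]|_]; [move: (leq_ltn_trans ai ia); rewrite ltnn | rewrite addr0].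
Qed.

End Mat.


Section Perd.
Variables (K : fieldType) (n : nat) (x0 : 'I_n).

Lemma pid_mulE m q r (A : 'M[K]_(m,q)) i k :
  (pid_mx r *m A) i k = if (i < r)%N then A i k else 0.
Proof.
rewrite mxE (bigD1 i) //= big1 ?addr0 => [|j ji]; rewrite !mxE.
  by rewrite eqxx; case: ifP; rewrite ?mul1r ?mul0r.
by rewrite (_ : (i == j :> nat) = false) ?mul0r //; apply/negbTE; rewrite eq_sym.
Qed.

Lemma mul_pidE m q r (A : 'M[K]_(m,q)) i k :
  (A *m pid_mx r) i k = if (k < r)%N then A i k else 0.
Proof.
rewrite mxE (bigD1 k) //= big1 ?addr0 => [|j jk]; rewrite !mxE.
  by rewrite eqxx; case: ifP; rewrite ?mulr1 ?mulr0.
by rewrite (_ : (j == k :> nat) = false) ?mulr0 //; apply/negbTE.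
Qed.

Lemma copid_mulE m q r (A : 'M[K]_(m,q)) i k :
  (copid_mx r *m A) i k = if (i < r)%N then 0 else A i k.
Proof.
by rewrite mulmxBl mul1mx mxE [X in _ + X]mxE pid_mulE; case: ifP; rewrite ?subrr ?subr0.
Qed.

Lemma mul_copidE m q r (A : 'M[K]_(m,q)) i k :
  (A *m copid_mx r) i k = if (k < r)%N then 0 else A i k.
Proof.
by rewrite mulmxBr mulmx1 mxE [X in _ + X]mxE mul_pidE; case: ifP; rewrite ?subrr ?subr0.
Qed.

Lemma PmE a b (C C' : 'M[K]_n) :
  (\matrix_(i < n) row_mx (if (i < a)%N then 0 else row i C)
                        (if (a + b <= i)%N then 0 else row i C'))
  = row_mx (copid_mx a *m C) (pid_mx (a + b) *m C').
Proof.
apply/row_matrixP => i; rewrite rowK row_row_mx; congr row_mx.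
  by apply/rowP => k; rewrite [RHS]mxE copid_mulE; case: ifP => _; rewrite !mxE.
by apply/rowP => k; rewrite [RHS]mxE pid_mulE ltnNge; case: ifP => _; rewrite !mxE.
Qed.


Lemma perd (P : 'M[K]_(n+n)) (L : {set 'I_n} -> {set 'I_n} -> K) d (X : 'M[K]_(d,n)) :
  is_lambda K n P L ->
  (forall S, \sum_T L S T * ext x0 X T = 0) \/
  exists (k : K) (Y : 'M[K]_(d,n)), [/\ forall S, \sum_T L S T * ext x0 X T = k * ext x0 Y S,
      \rank Y = d,
      (forall (w y : 'rV[K]_n), (w <= X)%MS -> (row_mx w y <= P)%MS -> (y <= Y)%MS) &
      (forall i, exists2 w : 'rV[K]_n, (w <= X)%MS & (row_mx w (row i Y) <= P)%MS)].
Proof.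
case=> a [b [c [C [C' [habc Cu C'u PPm Hspec]]]]].
rewrite PmE in PPm; move/eqmxP: PPm => PPm.
set Pm := row_mx _ _ in PPm.
have an : (a <= n)%N by rewrite -habc -addnA leq_addr.
have abn : (a + b <= n)%N by rewrite -habc leq_addr.
set M := X *m invmx C.
have XM : X = M *m C by rewrite /M mulmxKV.
clearbody M.
have zE : forall S, \sum_T L S T * ext x0 X T =
   \sum_(U : {set 'I_n} | #|U| == d) \det (minorS x0 d M U) *
       (if keptU n a b U then ext x0 (rowsel x0 d U C') S else 0).
  move=> S; rewrite XM.
  under eq_bigr do rewrite ext_CB big_distrr.
  rewrite exchange_big /=; apply: eq_bigr => U /eqP hU.
  transitivity (\det (minorS x0 d M U) * \sum_T L S T * wedge K n C U T).
    rewrite big_distrr; apply: eq_bigr => T _.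
    by rewrite (wedge_ext x0 C T hU) mulrCA.
  by rewrite Hspec (wedge_ext x0 C' S hU).
suff main : (forall S, \sum_T L S T * ext x0 X T = 0) \/
  exists (k : K) (Y : 'M[K]_(d,n)), [/\ forall S, \sum_T L S T * ext x0 X T = k * ext x0 Y S,
      (forall (w y : 'rV[K]_n), (w <= X)%MS -> (row_mx w y <= P)%MS -> (y <= Y)%MS) &
      (forall i, exists2 w : 'rV[K]_n, (w <= X)%MS & (row_mx w (row i Y) <= P)%MS)].
  case: main => [|[k [Y [h1 h2 h3]]]]; first by left.
  case: (ltnP (\rank Y) d) => hr.
    by left => S; rewrite h1 ext_rank ?mulr0.
  by right; exists k, Y; split => //; apply/eqP; rewrite eqn_leq rank_leq_row.
have ra : (\rank (M *m (pid_mx a : 'M[K]_n)) <= a)%N.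
  have := mxrankM_maxr M (pid_mx a : 'M[K]_n); rewrite rank_pid_mx //.
case: (ltnP (\rank (M *m (pid_mx a : 'M[K]_n))) a) => hr.
  have [lam [lam0 lamP lamM]] : exists lam : 'cV[K]_n,
      [/\ lam != 0, (pid_mx a : 'M[K]_n) *m lam = lam & M *m lam = 0].
    set T := (pid_mx a : 'M[K]_n) *m M^T.
    have rT : (\rank T < a)%N by rewrite /T -(tr_pid_mx K n n a) -trmx_mul mxrank_tr.
    have : ~~ (kermx T <= kermx (pid_mx a : 'M[K]_n))%MS.
      apply/negP => /mxrankS; rewrite !mxrank_ker rank_pid_mx //.
      by move: rT an; lia.
    case/row_subPn => i hi.
    set v := row i (kermx T).
    have vT : v *m T = 0 by rewrite /v -row_mul mulmx_ker row0.
    have vp : v *m (pid_mx a : 'M[K]_n) != 0 by rewrite -sub_kermx.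
    exists (v *m pid_mx a)^T; split.
    - by apply: contra vp => /eqP e; apply/eqP; apply: trmx_inj; rewrite e trmx0.
    - by rewrite trmx_mul tr_pid_mx mulmxA pid_mx_id.
    - by apply: trmx_inj; rewrite trmx_mul trmxK -mulmxA vT trmx0.
  left => S; rewrite zE big1 // => U /eqP hU; case: ifP => kU; last by rewrite mulr0.
  suff -> : \det (minorS x0 d M U) = 0 by rewrite mul0r.
  set N := minorS x0 d M U.
  set mu : 'cV[K]_d := rowsel x0 d U lam.
  have lamU k j : k \notin U -> lam k j = 0.
    move=> kn; have : lam k j = ((pid_mx a : 'M[K]_n) *m lam) k j by rewrite lamP.
    rewrite pid_mulE; case: ifP => ka //.
    by move/forallP: kU => /(_ k) /andP [/implyP h _]; rewrite h in kn.
  have Nmu : N *m mu = 0.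
    apply/matrixP => i j; rewrite !mxE.
    transitivity (\sum_(k < n) M i k * lam k j).
      under eq_bigr do rewrite !mxE.
      rewrite (sum_sel x0 (fun k => M i k * lam k j) hU).
      rewrite [RHS](bigID (fun k => k \in U)) /= [X in _ + X]big1 ?addr0 //.
      by move=> k kn; rewrite lamU ?mulr0.
    by have := congr1 (fun A : 'cV[K]_d => A i j) lamM; rewrite !mxE.
  have mu0 : mu != 0.
    have [[k j] /= lk|h] := pickP (fun kj : 'I_n * 'I_1 => lam kj.1 kj.2 != 0); last first.
      case/eqP: lam0; apply/matrixP => k j; rewrite mxE.
      by move: (h (k, j)) => /= /negbFE /eqP.
    have kU' : k \in U by apply: contraR lk => /lamU ->.
    have [j0 lt e] := sel_surj x0 kU'.
    have j0d : (j0 < d)%N by rewrite -hU.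
    apply/eqP => /matrixP /(_ (Ordinal j0d) j); rewrite !mxE /= e => /eqP.
    by rewrite (negPf lk).
  apply/eqP; apply: contraR mu0 => hN.
  have Nu : N \in unitmx by rewrite unitmxE unitfE.
  by rewrite -(mulKmx Nu mu) Nmu mulmx0.
have rA : \rank (M *m (pid_mx a : 'M[K]_n)) = a by apply/eqP; rewrite eqn_leq ra hr.
have ad : (a <= d)%N by rewrite -rA rank_leq_row.
set A0 := M *m (pid_mx a : 'M[K]_n) in rA.
set E := (pid_mx a : 'M[K]_(d,n)).
have A0E : (A0 <= E)%MS.
  by rewrite /A0 -(pid_mx_id K n (n:=d) n ad) mulmxA submxMl.
have EA0 : (E <= A0)%MS.
  by case/mxrank_leqif_sup: A0E => _; rewrite rA rank_pid_mx // eqxx => <-.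
case/submxP: EA0 => Lam ELam.
set Q := (pid_mx a : 'M[K]_d) *m Lam + kermx A0.
have QA : Q *m A0 = E.
  by rewrite mulmxDl mulmx_ker addr0 -mulmxA -ELam pid_mx_id.
have Qu : Q \in unitmx.
  rewrite -row_free_unit -kermx_eq0; apply/eqP/row_matrixP => i; rewrite row0.
  set mu := row i (kermx Q).
  have muQ : mu *m Q = 0 by rewrite /mu -row_mul mulmx_ker row0.
  have muE : mu *m E = 0 by rewrite -QA mulmxA muQ mul0mx.
  have mup : mu *m (pid_mx a : 'M[K]_d) = 0.
    by rewrite -(pid_mx_id K d (n:=n) d an) mulmxA muE mul0mx.
  move: muQ; rewrite /Q mulmxDr mulmxA mup mul0mx add0r /kermx rA mulmxA.
  have -> : mu *m copid_mx a = mu by rewrite /copid_mx mulmxBr mulmx1 mup subr0.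
  by move=> h; rewrite -(mulmxKV (col_ebase_unit A0) mu) h mul0mx.
have dQ : \det Q != 0 by rewrite -unitfE -unitmxE.
pose M2 := Q *m M.
have M2def : M2 = Q *m M by [].
clearbody M2.
have M2p : M2 *m (pid_mx a : 'M[K]_n) = E by rewrite M2def -mulmxA QA.
have M2E (i : 'I_d) (k : 'I_n) : (k < a)%N -> M2 i k = ((i : nat) == k)%:R.
  move=> ka; have := congr1 (fun A : 'M[K]_(d,n) => A i k) M2p.
  by rewrite mul_pidE ka => ->; rewrite mxE; case: eqP => // ->; rewrite ka.
pose Mc := E + (copid_mx a : 'M[K]_d) *m M2 *m (pid_mx (a+b) : 'M[K]_n).
have Mcdef : Mc = E + (copid_mx a : 'M[K]_d) *m M2 *m (pid_mx (a+b) : 'M[K]_n) by [].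
have McE (i : 'I_d) (k : 'I_n) : Mc i k = if (k < a)%N then ((i:nat) == k)%:R
       else if (a <= i)%N && (k < a + b)%N then M2 i k else 0.
  rewrite Mcdef mxE [E i k]mxE mul_pidE copid_mulE.
  case: (ltnP k a) => ka.
    rewrite (leq_trans ka (leq_addr _ _)).
    case: (ltnP i a) => ia; first by rewrite andbT addr0.
    by rewrite andbF add0r M2E //; case: eqP => // e; move: ia; rewrite e leqNgt ka.
  rewrite (_ : ((i:nat) == k) && (i < a)%N = false) ?add0r; last first.
    by apply/negbTE/andP => [[/eqP e ia]]; move: ia; rewrite e ltnNge ka.
  by case: (ltnP i a) => ia; case: ifP.
clearbody Mc.
have keyU (U : {set 'I_n}) : #|U| = d -> \det (minorS x0 d Mc U) =
    \det Q * (if keptU n a b U then \det (minorS x0 d M U) else 0).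
  move=> hU; case: ifP => kU.
    rewrite -det_mulmx -minorS_mul -M2def.
    have kU1 : forall k : 'I_n, (k < a)%N -> k \in U.
      by move=> k ka; move/forallP: kU => /(_ k) /andP [/implyP h _]; apply: h.
    have kU2 : forall k : 'I_n, k \in U -> (k < a + b)%N.
      by move=> k kin; move/forallP: kU => /(_ k) /andP [_ /implyP h]; apply: h.
    have srt := sel_sorted x0 kU1 an.
    rewrite [RHS](blockdet (a := a)); last first.
      move=> i j ja; rewrite mxE.
      have jU : (j < #|U|)%N by rewrite hU.
      have [s1 _] := srt j jU.
      by rewrite M2E (s1 ja).
    congr (\det _); apply/matrixP => i j; rewrite !mxE McE.
    have jU : (j < #|U|)%N by rewrite hU.
    have [s1 s2] := srt j jU.
    case: (ltnP j a) => ja.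
      by rewrite (s1 ja) ja M2E (s1 ja).
    rewrite ltnNge s2 //= kU2 ?sel_mem // andbT.
    by case: ifP.
  rewrite mulr0.
  move/negbT: kU; rewrite negb_forall => /existsP [k]; rewrite negb_and => /orP [h|h].
    rewrite negb_imply in h; case/andP: h => ka kn.
    have kd : (k < d)%N by apply: leq_trans ka ad.
    apply: (det_row0 (i := Ordinal kd)) => j; rewrite mxE McE /=.
    have sU : sel x0 U j \in U by apply: sel_mem; rewrite hU.
    case: ifP => _.
      by case: eqP => // e; move: kn; rewrite (_ : k = sel x0 U j) ?sU //; apply: val_inj.
    by rewrite leqNgt ka.
  rewrite negb_imply -leqNgt in h; case/andP: h => kin kab.
  have [j0 lt e] := sel_surj x0 kin.
  have j0d : (j0 < d)%N by rewrite -hU.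
  apply: (det_col0 (j := Ordinal j0d)) => i; rewrite mxE McE /= e.
  rewrite ltnNge (leq_trans (leq_addr _ _) kab) /= ltnNge kab andbF.
  done.
have zY S : \sum_T L S T * ext x0 X T = (\det Q)^-1 * ext x0 (Mc *m C') S.
  rewrite zE ext_CB big_distrr; apply: eq_bigr => U /eqP hU; rewrite keyU //.
  by case: ifP => _; rewrite /= ?mulr0 ?mul0r ?mulr0 // !mulrA mulVf // mul1r.
right; exists (\det Q)^-1, (Mc *m C'); split => //.
  move=> w y wX; rewrite PPm => /submxP [lam e].
  move: e; rewrite /Pm mul_mx_row => /eq_row_mx [ew ey].
  have lcM : (lam *m copid_mx a <= M2)%MS.
    have MX : M = X *m invmx C by rewrite XM mulmxK.
    have h1 : (w *m invmx C <= M)%MS by rewrite MX submxMr.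
    have h2 : w *m invmx C = lam *m copid_mx a by rewrite ew mulmxA mulmxK.
    have h3 : (M <= M2)%MS by rewrite M2def -[M in (M <= _)%MS](mulKmx Qu) submxMl.
    by rewrite -h2 (submx_trans h1 h3).
  case/submxP: lcM => nu enu.
  have nuE : nu *m E = 0 by rewrite -M2p mulmxA -enu -mulmxA mul_copid_mx_pid // mulmx0.
  have nup : nu *m (pid_mx a : 'M[K]_d) = 0.
    by rewrite -(pid_mx_id K d (n:=n) d an) mulmxA nuE mul0mx.
  apply/submxP; exists (lam *m (pid_mx a : 'M[K]_(n,d)) + nu).
  rewrite ey mulmxA [RHS]mulmxA; congr (_ *m C').
  have t1 : lam *m (pid_mx a : 'M[K]_(n,d)) *m E = lam *m (pid_mx a : 'M[K]_n).
    by rewrite -mulmxA pid_mx_id.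
  have t2 : lam *m (pid_mx a : 'M[K]_(n,d)) *m
      ((copid_mx a : 'M[K]_d) *m M2 *m (pid_mx (a+b) : 'M[K]_n)) = 0.
    by rewrite -!mulmxA (mulmxA (pid_mx a)) mul_pid_mx_copid // mul0mx mulmx0.
  have nuc : nu *m (copid_mx a : 'M[K]_d) = nu by rewrite mulmxBr mulmx1 nup subr0.
  have t3 : nu *m ((copid_mx a : 'M[K]_d) *m M2 *m (pid_mx (a+b) : 'M[K]_n)) =
      lam *m copid_mx a *m (pid_mx (a+b) : 'M[K]_n).
    by rewrite !mulmxA nuc enu.
  have pp : (pid_mx a : 'M[K]_n) *m (pid_mx (a+b) : 'M[K]_n) = pid_mx a.
    by rewrite mul_pid_mx (minn_idPl (leq_addr b a)) (minn_idPr an).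
  rewrite Mcdef mulmxDr (mulmxDl _ nu E) (mulmxDl _ nu (_ *m _ *m _)) t1 t2 nuE t3 addr0 add0r.
  by rewrite -mulmxA mulmxBl mul1mx pp mulmxBr addrC subrK.
move=> i.
have ZE : (E + (copid_mx a : 'M[K]_d) *m M2) *m Pm =
    row_mx ((copid_mx a : 'M[K]_d) *m M2 *m C) (Mc *m C').
  rewrite /Pm mul_mx_row; congr row_mx.
    rewrite !mulmxA mulmxDl; congr (_ *m C).
    have e1 : E *m copid_mx a = 0.
      by rewrite mulmxBr mulmx1 pid_mx_id // subrr.
    have e2 : (copid_mx a : 'M[K]_d) *m M2 *m copid_mx a = (copid_mx a : 'M[K]_d) *m M2.
      by rewrite mulmxBr mulmx1 -mulmxA M2p mul_copid_mx_pid // subr0.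
    by rewrite e1 e2 add0r.
  rewrite !mulmxA mulmxDl Mcdef; congr (_ *m C'); congr (_ + _).
  by rewrite mul_pid_mx (minn_idPl (leq_addr b a)) (minn_idPr an).
exists (row i ((copid_mx a : 'M[K]_d) *m M2 *m C)).
  apply: submx_trans (row_sub _ _) _.
  by rewrite M2def -!mulmxA -XM mulmxA; exact: submxMl.
rewrite (_ : row_mx _ _ = row i ((E + (copid_mx a : 'M[K]_d) *m M2) *m Pm)); last by rewrite ZE row_row_mx.
by rewrite row_mul PPm; exact: submxMl.
Qed.

End Perd.


Section Flag.
Variables (K : fieldType) (n : nat).

Lemma row_pidM d m (R : 'M[K]_(m,n)) (i : 'I_m) :
  row i (pid_mx d *m R) = if (i < d)%N then row i R else 0.
Proof. by apply/rowP => k; rewrite [LHS]mxE pid_mulE; case: ifP => _; rewrite !mxE. Qed.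

Lemma flag (E : nat -> 'M[K]_n) (D : pred nat) :
  (forall d, D d -> \rank (E d) = d) ->
  (forall d d', D d -> D d' -> (d < d')%N -> (E d <= E d')%MS) ->
  exists U : 'M[K]_n, U \in unitmx /\ forall d, D d -> (E d <= (pid_mx d : 'M[K]_n) *m U)%MS.
Proof.
move=> rE nest.
have dn d : D d -> (d <= n)%N by move=> Dd; rewrite -(rE d Dd) rank_leq_col.
suff : forall k, (k <= n)%N -> exists R : 'M[K]_n,
   [/\ \rank R = k, (forall i : 'I_n, (k <= i)%N -> row i R = 0),
       (forall d, D d -> (d <= k)%N -> (E d <= (pid_mx d : 'M[K]_n) *m R)%MS) &
       (forall d, D d -> (k < d)%N -> (R <= E d)%MS)].
  case/(_ n (leqnn n)) => R [r1 _ r3 _]; exists R; split.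
    by rewrite -row_free_unit /row_free r1.
  by move=> d Dd; apply: r3 => //; apply: dn.
elim=> [_|k IH kn].
  exists 0; split.
  - by rewrite mxrank0.
  - by move=> i _; rewrite row0.
  - move=> d Dd; rewrite leqn0 => /eqP d0.
    have : E d == 0 by rewrite -mxrank_eq0 rE // d0.
    by move/eqP ->; rewrite sub0mx.
  - by move=> d _ _; rewrite sub0mx.
have [R [r1 r2 r3 r4]] := IH (ltnW kn).
have [v vR vE] : exists2 v : 'rV[K]_n, ~~ (v <= R)%MS &
    forall d, D d -> (k < d)%N -> (v <= E d)%MS.
  case: (boolP [exists d : 'I_n.+1, D d && (k < d)%N]) => hex.
    have exP : exists m, D m && (k < m)%N.
      by case/existsP: hex => d hd; exists d.
    case: (ex_minnP exP) => m /andP [Dm km] mmin.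
    have : ~~ (E m <= R)%MS.
      apply/negP => /mxrankS; rewrite rE // r1; move: km; lia.
    case/row_subPn => r hr; exists (row r (E m)) => // d Dd kd.
    apply: submx_trans (row_sub _ _) _.
    have := mmin d; rewrite Dd kd => /(_ isT); rewrite leq_eqVlt => /orP [/eqP->//|md].
    exact: nest.
  have : ~~ ((1%:M : 'M[K]_n) <= R)%MS.
    by apply/negP => /mxrankS; rewrite mxrank1 r1; move: kn; lia.
  case/row_subPn => r hr; exists (row r 1%:M) => // d Dd kd.
  case/negP: hex; apply/existsP; exists (Ordinal (dn d Dd : (d < n.+1)%N)).
  by rewrite /= Dd kd.
have kn' : (k < n)%N by [].
pose R' : 'M[K]_n := \matrix_i (if (i : nat) == k then v else row i R).
have rowR' i : row i R' = if (i : nat) == k then v else row i R by rewrite rowK.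
have R'sub : (R' <= R + v)%MS.
  apply/row_subP => i; rewrite rowR'; case: ifP => _.
    exact: addsmxSr.
  exact: submx_trans (row_sub _ _) (addsmxSl _ _).
have subR' : (R + v <= R')%MS.
  rewrite addsmx_sub; apply/andP; split.
    apply/row_subP => i; case: (boolP ((i : nat) == k)) => ik.
      by rewrite r2 ?sub0mx // (eqP ik).
    by rewrite (_ : row i R = row i R') ?row_sub // rowR' (negPf ik).
  by rewrite (_ : v = row (Ordinal kn') R') ?row_sub // rowR' eqxx.
have rR' : \rank R' = k.+1.
  apply/eqP; rewrite eqn_leq; apply/andP; split.
    apply: leq_trans (mxrankS R'sub) _.
    apply: leq_trans (mxrank_adds_leqif R v).1 _.
    by rewrite r1 rank_rV; case: (v != 0) => /=; lia.
  apply: leq_trans (mxrankS subR').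
  rewrite -r1; apply: rank_ltmx; rewrite ltmxE addsmxSl /= addsmx_sub negb_and.
  by rewrite vR orbT.
exists R'; split => //.
- move=> i ki; rewrite rowR' ifF ?r2 //; first by apply: ltnW.
  by apply/negbTE; rewrite neq_ltn ki orbT.
- move=> d Dd; rewrite leq_eqVlt => /orP [/eqP dk|dk].
    have -> : (pid_mx d : 'M[K]_n) *m R' = R'.
      apply/row_matrixP => i; rewrite row_pidM; case: ifP => // id.
      by rewrite rowR' ifF ?r2 //; move/negbT: id; rewrite dk -leqNgt => id; lia.
    have R'E : (R' <= E d)%MS.
      apply: submx_trans R'sub _; rewrite addsmx_sub r4 ?vE //; by rewrite dk.
    by case/mxrank_leqif_sup: R'E => _; rewrite rR' rE // dk eqxx => <-.
  have -> : (pid_mx d : 'M[K]_n) *m R' = (pid_mx d : 'M[K]_n) *m R.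
    apply/row_matrixP => i; rewrite !row_pidM; case: ifP => // id.
    rewrite rowR' ifF //; apply/negbTE; apply: contraTneq id => ->.
    by rewrite -leqNgt -ltnS.
  by apply: r3.
- move=> d Dd kd; apply: submx_trans R'sub _.
  by rewrite addsmx_sub r4 ?vE //; apply: ltnW.
Qed.

End Flag.


Definition Td n d : {set 'I_n} := [set i : 'I_n | (i < d)%N].

Lemma Td_card n d : (d <= n)%N -> #|Td n d| = d.
Proof.
move=> dn.
have -> : Td n d = [set widen_ord dn j | j in 'I_d].
  apply/setP => i; rewrite inE; apply/idP/imsetP => [id | [j _ ->]].
    by exists (Ordinal id) => //; apply: val_inj.
  by rewrite /= ltn_ord.
by rewrite card_imset ?card_ord // => i j /(congr1 val) /= e; apply: val_inj.
Qed.

Lemma degs_bound n nu x : x \in degs n nu -> (0 < x <= n)%N.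
Proof.
case/flattenP => s /mapP [j]; rewrite mem_iota => /andP [j1 jn] -> .
rewrite mem_nseq => /andP [_ /eqP ->]; move: j1 jn; lia.
Qed.

Section Tensor.
Variables (K : fieldType) (n : nat) (nu : seq nat).
Local Notation s := (size (degs n nu)).
Local Notation dg t := (nth 0%N (degs n nu) t).

Lemma dg_bound (t : 'I_s) : (0 < dg t <= n)%N.
Proof. by apply: degs_bound; apply: mem_nth. Qed.

Lemma sum_TIdx (H : 'I_s -> {set 'I_n} -> K) :
  (forall (t : 'I_s) (T : {set 'I_n}), #|T| != dg t -> H t T = 0) ->
  \sum_(J : TIdx n nu) \prod_t H t (val J t) = \prod_t \sum_T H t T.
Proof.
move=> H0; rewrite bigA_distr_bigA /=.
rewrite (bigID (fun f : {ffun 'I_s -> {set 'I_n}} => [forall t, #|f t| == dg t])) /=.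
rewrite [X in _ = _ + X]big1 ?addr0; last first.
  move=> f; rewrite negb_forall => /existsP [t ht]; rewrite (bigD1 t) //= H0 // mul0r.
  done.
by rewrite [RHS]big_sub.
Qed.

Lemma rnu_prod (A : MatTuple K n) (w : 'I_s -> {set 'I_n} -> K) (x : TIdx n nu -> K) :
  (forall (t : 'I_s) (T : {set 'I_n}), #|T| != dg t -> w t T = 0) ->
  (forall J, x J = \prod_t w t (val J t)) ->
  forall I, rnu K n nu A x I = \prod_(t < s) \sum_T A (dg t) (val I t) T * w t T.
Proof.
move=> w0 xE I; rewrite /rnu.
under eq_bigr do rewrite xE -big_split /=.
rewrite -(@sum_TIdx (fun t T => A (dg t) (val I t) T * w t T)) //.
by move=> t T hT; rewrite w0 // mulr0.
Qed.

Lemma Hgen_prod g I :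
  Hgen K n nu g I = \prod_(t < s) wedge K n g^T (Td n (dg t)) (val I t).
Proof.
rewrite /Hgen (@rnu_prod _ (fun t T => (T == Td n (dg t))%:R)).
- apply: eq_bigr => t _; rewrite (bigD1 (Td n (dg t))) //= eqxx mulr1 big1 ?addr0 //.
  by move=> T /negPf ->; rewrite mulr0.
- move=> t T hT; rewrite (_ : (T == _) = false) //; apply/negbTE.
  by apply: contra hT => /eqP ->; rewrite Td_card //; case/andP: (dg_bound t).
- move=> J; rewrite /Xi; case: ifP => [/forallP h|/negbT].
    by rewrite big1 // => t _; rewrite (h t).
  by rewrite negb_forall => /existsP [t ht]; rewrite (bigD1 t) //= (negPf ht) mul0r.
Qed.

Lemma rnu_Hgen A g I :
  rnu K n nu A (Hgen K n nu g) I =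
  \prod_(t < s) \sum_T A (dg t) (val I t) T * wedge K n g^T (Td n (dg t)) T.
Proof.
apply: rnu_prod => [t T hT|J]; last exact: Hgen_prod.
rewrite /wedge ifF //; apply/negbTE; rewrite Td_card //.
by case/andP: (dg_bound t).
Qed.

End Tensor.

Section Rel.
Variables (K : fieldType) (n : nat).

Lemma indef_sub (P : 'M[K]_(n+n)) (y : 'rV[K]_n) :
  (y <= relIndef K n P)%MS -> (row_mx 0 y <= P)%MS.
Proof.
case/submxP => l ->; rewrite /relIndef.
apply/submxP; exists (l *m kermx (lsubmx P)).
transitivity (l *m kermx (lsubmx P) *m row_mx (lsubmx P) (rsubmx P)); last by rewrite hsubmxK.
by rewrite mul_mx_row -mulmxA mulmx_ker mulmx0 mulmxA.
Qed.

Lemma im_sub (P : 'M[K]_(n+n)) (w y : 'rV[K]_n) :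
  (row_mx w y <= P)%MS -> (y <= relIm K n P)%MS.
Proof.
case/submxP => l e; apply/submxP; exists l.
by move: e; rewrite -{1}[P]hsubmxK mul_mx_row => /eq_row_mx [_ ->].
Qed.

Lemma hinge_chain (Ps : seq 'M[K]_(n+n)) : hinge K n Ps ->
  forall j j', (j < j')%N -> (j' < size Ps)%N ->
  (relIm K n (relj K n Ps j) <= relIndef K n (relj K n Ps j'))%MS.
Proof.
case=> _ _ h3 _ _ j j' jj'; rewrite -(subnKC jj').
elim: (j' - j.+1)%N => [|k IH] hs.
  by rewrite addn0 in hs *; case: (h3 j hs) => _ /andP [].
rewrite addnS in hs *.
have hs' : (j.+1 + k < size Ps)%N by apply: ltnW.
apply: submx_trans (IH hs') _.
apply: submx_trans (submxMl _ _) _.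
by case: (h3 _ hs) => _ /andP [].
Qed.

End Rel.


Section Main.
Variables (K : fieldType).

Lemma rowsel_sub n (x0 : 'I_n) d d' (S S' : {set 'I_n}) (B : 'M[K]_n) :
  #|S| = d -> #|S'| = d' -> S \subset S' ->
  (rowsel x0 d S B <= rowsel x0 d' S' B)%MS.
Proof.
move=> hS hS' sub; apply/row_subP => i.
have iS : sel x0 S i \in S by apply: sel_mem; rewrite hS.
have [j jlt e] := sel_surj x0 (subsetP sub _ iS).
have jd : (j < d')%N by rewrite -hS'.
rewrite (_ : row i _ = row (Ordinal jd) (rowsel x0 d' S' B)) ?row_sub //.
by apply/rowP => k; rewrite !mxE /= e.
Qed.

Lemma pid_rowsel n (x0 : 'I_n) d (U : 'M[K]_n) : (d <= n)%N ->
  ((pid_mx d : 'M[K]_n) *m U <= rowsel x0 d (Td n d) U)%MS.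
Proof.
move=> dn; apply/row_subP => i; rewrite row_pidM; case: ifP => id; last by rewrite sub0mx.
have iT : i \in Td n d by rewrite inE.
have [j jlt e] := sel_surj x0 iT.
have jd : (j < d)%N by rewrite -(Td_card dn).
rewrite (_ : row i U = row (Ordinal jd) (rowsel x0 d (Td n d) U)) ?row_sub //.
by apply/rowP => k; rewrite !mxE /= e.
Qed.


Lemma main_gen (n : nat) (nu : seq nat) (A : MatTuple K n) :
  inHingeT K n A -> forall g : 'M[K]_n, g \in unitmx ->
  exists (c : K) (u : 'M[K]_n), u \in unitmx /\
    forall I, rnu K n nu A (Hgen K n nu g) I = c * Hgen K n nu u I.
Proof.
case: n A => [|n] A [Ps [hP HA]] g gu.
  exists 1, g; split => // I; rewrite rnu_Hgen Hgen_prod mul1r !big1 //.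
    by case.
  by case.
pose x0 : 'I_n.+1 := ord0.
pose s := size (degs n.+1 nu).
pose B := g^T.
pose X d : 'M[K]_(d, n.+1) := rowsel x0 d (Td n.+1 d) B.
pose fac d S := \sum_T A d S T * wedge K n.+1 B (Td n.+1 d) T.
have rnuE I : rnu K n.+1 nu A (Hgen K n.+1 nu g) I =
    \prod_(t < s) fac (nth 0%N (degs n.+1 nu) t) (val I t).
  by rewrite rnu_Hgen.
have facE d : d \in degs n.+1 nu -> exists (c : K) (j : nat) (L : {set 'I_n.+1} -> {set 'I_n.+1} -> K), [/\ (j < size Ps)%N,
    is_lambda K n.+1 (relj K n.+1 Ps j) L &
    forall S : {set 'I_n.+1}, #|S| = d -> fac d S = c * \sum_T L S T * ext x0 (X d) T].
  move=> dd; have /andP [d0 dn] := degs_bound dd.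
  have [c [j [L [jlt isl _ hAL]]]] := HA d dn.
  exists c, j, L; split => // S hS; rewrite /fac big_distrr; apply: eq_bigr => T _ /=.
  case: (boolP (#|T| == d)) => hT.
    by rewrite hAL // ?(eqP hT) // (wedge_ext x0 B T (Td_card dn)) mulrA.
  rewrite /ext (negPf hT) !mulr0 /wedge ifF ?mulr0 //; apply/negbTE.
  by rewrite Td_card.
case: (boolP [exists t : 'I_s, [forall S : {set 'I_n.+1},
    (#|S| == nth 0%N (degs n.+1 nu) t) ==> (fac (nth 0%N (degs n.+1 nu) t) S == 0)]]) => hZ.
  exists 0, 1%:M; split; first exact: unitmx1.
  move=> I; rewrite mul0r rnuE; case/existsP: hZ => t /forallP ht.
  rewrite (bigD1 t) //= (eqP (implyP (ht _) _)) ?mul0r //.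
  by move/forallP: (valP I) => /(_ t).
pose Prp d (r : (K * 'M[K]_(d, n.+1) * nat)%type) :=
  [/\ forall S : {set 'I_n.+1}, #|S| = d -> fac d S = r.1.1 * ext x0 r.1.2 S,
      \rank r.1.2 = d, (r.2 < size Ps)%N,
      (forall w y : 'rV[K]_n.+1, (w <= X d)%MS -> (row_mx w y <= relj K n.+1 Ps r.2)%MS ->
          (y <= r.1.2)%MS) &
      (forall i, exists2 w : 'rV[K]_n.+1, (w <= X d)%MS &
          (row_mx w (row i r.1.2) <= relj K n.+1 Ps r.2)%MS)].
have Hd d : exists r, d \in degs n.+1 nu -> Prp d r.
  case: (boolP (d \in degs n.+1 nu)) => dd; last by exists (0, 0, 0%N).
  have [c [j [L [jlt isl hfac]]]] := facE d dd.
  case: (perd x0 (X d) isl) => [z0|[k [Y [h1 h2 h3 h4]]]].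
    exfalso; move/negP: hZ; apply.
    have ti : (index d (degs n.+1 nu) < s)%N by rewrite index_mem.
    apply/existsP; exists (Ordinal ti); apply/forallP => S; apply/implyP.
    rewrite /= nth_index // => /eqP hS.
    by rewrite hfac // z0 mulr0.
  exists (c * k, Y, j) => _; split => //= S hS.
  by rewrite hfac // h1 mulrA.
pose f d := proj1_sig (constructive_indefinite_description _ (Hd d)).
have hf d : d \in degs n.+1 nu -> Prp d (f d).
  exact: (proj2_sig (constructive_indefinite_description _ (Hd d))).
have Xsub d d' : d \in degs n.+1 nu -> d' \in degs n.+1 nu -> (d <= d')%N -> (X d <= X d')%MS.
  move=> dd dd' le; have /andP [_ dn] := degs_bound dd; have /andP [_ dn'] := degs_bound dd'.
  apply: rowsel_sub; rewrite ?Td_card //.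
  by apply/subsetP => i; rewrite !inE => /leq_trans; apply.
have nest d d' : d \in degs n.+1 nu -> d' \in degs n.+1 nu -> (d < d')%N ->
    ((f d).1.2 <= (f d').1.2)%MS.
  move=> dd dd' lt.
  have [_ r1 j1 h3 h4] := hf d dd; have [_ r1' j1' h3' h4'] := hf d' dd'.
  have XX := Xsub d d' dd dd' (ltnW lt).
  have ImY d1 (dd1 : d1 \in degs n.+1 nu) :
      ((f d1).1.2 <= relIm K n.+1 (relj K n.+1 Ps (f d1).2))%MS.
    have [_ _ _ _ h] := hf d1 dd1.
    by apply/row_subP => i; case: (h i) => w _; apply: im_sub.
  have IndY d1 (dd1 : d1 \in degs n.+1 nu) :
      (relIndef K n.+1 (relj K n.+1 Ps (f d1).2) <= (f d1).1.2)%MS.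
    have [_ _ _ h _] := hf d1 dd1.
    apply/row_subP => i; apply: (h 0); first by rewrite sub0mx.
    by apply: indef_sub; apply: row_sub.
  case: (ltngtP (f d).2 (f d').2) => jj.
  - apply: submx_trans (ImY d dd) _; apply: submx_trans (IndY d' dd').
    exact: hinge_chain.
  - exfalso.
    have : ((f d').1.2 <= (f d).1.2)%MS.
      apply: submx_trans (ImY d' dd') _; apply: submx_trans (IndY d dd).
      exact: hinge_chain.
    by move/mxrankS; rewrite r1 r1'; move: lt; lia.
  - apply/row_subP => i; case: (h4 i) => w wX wP.
    by apply: (h3' w); [apply: submx_trans wX XX | rewrite -jj].
have fl1 : forall d, d \in degs n.+1 nu -> \rank <<(f d).1.2>>%MS = d.
  by move=> d dd; have [_ r1 _ _ _] := hf d dd; rewrite genmxE.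
have fl2 : forall d d', d \in degs n.+1 nu -> d' \in degs n.+1 nu -> (d < d')%N ->
    (<<(f d).1.2>> <= <<(f d').1.2>>)%MS.
  by move=> d d' dd dd' lt; rewrite !genmxE; apply: nest.
have [U [Uu hU]] := @flag K n.+1 (fun d => <<(f d).1.2>>%MS) [pred d | d \in degs n.+1 nu] fl1 fl2.
have q_ex (t : 'I_s) : exists q : K, forall S : {set 'I_n.+1}, #|S| = nth 0%N (degs n.+1 nu) t ->
    fac (nth 0%N (degs n.+1 nu) t) S = q * wedge K n.+1 U (Td n.+1 (nth 0%N (degs n.+1 nu) t)) S.
  set d := nth 0%N (degs n.+1 nu) t.
  have dd : d \in degs n.+1 nu by apply: mem_nth.
  have /andP [_ dn] := degs_bound dd.
  have [h1 _ _ _ _] := hf d dd.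
  have : ((f d).1.2 <= rowsel x0 d (Td n.+1 d) U)%MS.
    apply: submx_trans (pid_rowsel x0 U dn).
    by rewrite -genmxE; apply: hU.
  case/submxP => Q eQ.
  exists ((f d).1.1 * \det Q) => S hS.
  by rewrite h1 // eQ ext_mul (wedge_ext x0 U S (Td_card dn)) mulrA.
have [q hq] := fin_all_exists q_ex.
exists (\prod_(t < s) q t), U^T; split; first by rewrite unitmx_tr.
move=> I; rewrite rnuE Hgen_prod trmxK -big_split /=; apply: eq_bigr => t _.
apply: hq.
by move/forallP: (valP I) => /(_ t) /eqP.
Qed.

End Main.

End Helpers.
Import Helpers.

Theorem lemma2p13 (R : realType) (n : nat) (nu : seq nat) :
  signature n nu ->
  forall A : MatTuple R[i] n, inHingeT R[i] n A ->
  forall x : TIdx n nu -> R[i], inH R[i] n nu x -> inH R[i] n nu (rnu R[i] n nu A x).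
Proof.
move=> _ A hA x [m [gs [cs [gu xE]]]].
have ex : forall i : 'I_m, exists p : (R[i] * 'M[R[i]]_n)%type, p.2 \in unitmx /\
    forall I, rnu R[i] n nu A (Hgen R[i] n nu (gs i)) I = p.1 * Hgen R[i] n nu p.2 I.
  by move=> i; have [c [u [uu hu]]] := main_gen nu hA (gu i); exists (c, u).
have [p hp] := fin_all_exists ex.
exists m, (fun i => (p i).2), (fun i => cs i * (p i).1); split.
  by move=> i; case: (hp i).
move=> I; rewrite /rnu.
under eq_bigr do rewrite xE big_distrr.
rewrite exchange_big /=; apply: eq_bigr => i _.
rewrite -mulrA -(proj2 (hp i) I) /rnu big_distrr; apply: eq_bigr => J _ /=.
by rewrite mulrCA.
Qed.
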